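(* Let $q=3$ and $n\geq 3$, and let $c>0$ be a real number such that $k=\frac{n}{3}(\log(2n)+c)$ is an integer. Then $$\Vert \nu_n^{*k}-\pi_n\Vert_{TV}^2\leq \frac52\left(e^{e^{-c}}-1\right).$$
   Context: For integers $n\geq1$, $q\geq2$, the Hamming scheme $H(n,q)$ is the graph with vertex set $X_n=\{0,1,\dots,q-1\}^n$ in which $x$ and $x'$ are adjacent ($x\sim x'$) iff they differ in exactly one coordinate. The simple random walk has transition probability $p_n(x,x')=\frac{1}{n(q-1)}$ if $x\sim x'$ and $0$ otherwise. Let $p_n^{(k)}$ denote the $k$-step transition probability ($p_n^{(0)}(x,x')=\delta_{x,x'}$), $x^{(0)}=(0,\dots,0)$, and $\nu_n^{*k}(x)=p_n^{(k)}(x^{(0)},x)$. $\pi_n$ is the uniform probability measure on $X_n$. For measures $\mu,\nu$ on $X_n$, $\Vert\mu-\nu\Vert_{TV}=\max_{S\subset X_n}|\mu(S)-\nu(S)|$. *)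

(* Defs.v *)
From mathcomp Require Import all_boot.
From Stdlib Require Import Reals.
Set Implicit Arguments. Unset Strict Implicit. Unset Printing Implicit Defensive.

Definition hvert (n q : nat) : finType := {ffun 'I_n -> 'I_q}.

Definition hadj (n q : nat) (x y : hvert n q) : bool :=
  #|[set i : 'I_n | x i != y i]| == 1.

Definition hp (n q : nat) (x y : hvert n q) : R :=
  if hadj x y then (/ (INR n * INR (q - 1)))%R else 0%R.

Fixpoint hpk (n q : nat) (k : nat) (x y : hvert n q) : R :=
  match k with
  | 0 => if x == y then 1%R else 0%R
  | k'.+1 => \big[Rplus/0%R]_(z : hvert n q) (hpk k' x z * hp z y)%R
  end.

Definition horigin (n q : nat) : hvert n q.+1 := [ffun _ => ord0].

Definition hnu (n q k : nat) (x : hvert n q.+1) : R := hpk k (horigin n q) x.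

Definition hpi (n q : nat) (x : hvert n q) : R := (/ INR #|hvert n q|)%R.

Definition meas (T : finType) (mu : T -> R) (S : {set T}) : R :=
  \big[Rplus/0%R]_(x in S) mu x.

Definition tv (T : finType) (mu nu : T -> R) : R :=
  \big[Rmax/0%R]_(S : {set T}) Rabs (meas mu S - meas nu S).

(* Main.v *)
Require Import Defs.
From mathcomp Require Import all_boot.
From Stdlib Require Import Reals.
From Stdlib Require Import Lra Lia.
From mathcomp Require Import Rstruct.
Open Scope R_scope.
Set Implicit Arguments. Unset Strict Implicit.
Definition bI (b : bool) : R := if b then 1 else 0.
Lemma sum_indR (I : finType) (P : pred I) :
  \big[Rplus/0]_(i : I) bI (P i) = INR #|P|.
Proof.
transitivity (INR (\sum_(i : I) (if P i then 1 else 0))%N).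
  rewrite (big_morph INR plus_INR (erefl (INR 0))).
  by apply: eq_bigr => i _; rewrite /bI; case: (P i).
by rewrite -big_mkcond /= sum1_card.
Qed.

Lemma sum_constR (I : finType) (c : R) :
  \big[Rplus/0]_(i : I) c = INR #|I| * c.
Proof.
transitivity (\big[Rplus/0]_(i : I) (bI true * c)).
  by apply: eq_bigr => i _; rewrite /bI Rmult_1_l.
rewrite -big_distrl /= (sum_indR (fun _ : I => true)).
f_equal; f_equal; apply: eq_card => i //.
Qed.
Definition gG (s : bool) (u a : 'I_3) : R :=
  if s then (if u == a then 2/3 else -1/3) else 1/3.

Lemma sum3 (F : 'I_3 -> R) :
  \big[Rplus/0]_(a : 'I_3) F a = F (@Ordinal 3 0 isT) + F (@Ordinal 3 1 isT) + F (@Ordinal 3 2 isT).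
Proof.
rewrite !big_ord_recl big_ord0 Rplus_0_r Rplus_assoc.
do 3 f_equal; apply: val_inj => //.
Qed.

Lemma ord3_cases (a : 'I_3) : a = @Ordinal 3 0 isT \/ a = @Ordinal 3 1 isT \/ a = @Ordinal 3 2 isT.
Proof.
case: a => [[|[|[|m]]] Hm].
- left; exact: val_inj.
- right; left; exact: val_inj.
- right; right; exact: val_inj.
- by [].
Qed.

Lemma sumG_eq s u b :
  \big[Rplus/0]_(a : 'I_3) (gG s u a * bI (a == b)) = gG s u b.
Proof.
rewrite sum3.
case: s; case: (ord3_cases u) => [->|[->|->]]; case: (ord3_cases b) => [->|[->|->]];
  rewrite /gG /bI /=; lra.
Qed.

Lemma sumG_neq s u b :
  \big[Rplus/0]_(a : 'I_3) (gG s u a * bI (a != b)) = (if s then -1 else 2) * gG s u b.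
Proof.
rewrite sum3.
case: s; case: (ord3_cases u) => [->|[->|->]]; case: (ord3_cases b) => [->|[->|->]];
  rewrite /gG /bI /=; lra.
Qed.

Lemma sumG_sq s t u :
  \big[Rplus/0]_(a : 'I_3) (gG s u a * gG t u a) =
  if s then (if t then 2/3 else 0) else (if t then 0 else 1/3).
Proof.
rewrite sum3.
case: s; case: t; case: (ord3_cases u) => [->|[->|->]];
  rewrite /gG /=; lra.
Qed.
Definition fS (n : nat) (S : {set 'I_n}) (x y : hvert n 3) : R :=
  \big[Rmult/1]_i gG (i \in S) (x i) (y i).

Lemma fS_sum0 (n : nat) (x y : hvert n 3) :
  \big[Rplus/0]_(A : {set 'I_n}) fS A x y = bI (x == y).
Proof.
rewrite /fS.
transitivity (\big[Rmult/1]_i (gG true (x i) (y i) + gG false (x i) (y i))).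
  rewrite (@bigA_distr R 0 1 Rmult Rplus).
  apply: eq_bigr => A _; apply: eq_bigr => i _; by case: (i \in A).
have E : forall i, gG true (x i) (y i) + gG false (x i) (y i) = bI (x i == y i).
  move=> i; rewrite /gG /bI; case: (x i == y i); lra.
under eq_bigr => i _ do rewrite E.
case: (boolP (x == y)) => [/eqP ->|nxy].
  rewrite /bI; apply: big1 => i _; by rewrite eqxx.
have [i Hi] : exists i, x i != y i.
  apply/existsP; apply: contraR nxy => /existsPn H; apply/eqP/ffunP => i.
  by move: (H i); rewrite negbK => /eqP.
rewrite (bigD1 i) //= /bI (negbTE Hi) Rmult_0_l //.
Qed.
Lemma prod_ind (I : finType) (b : I -> bool) :
  \big[Rmult/1]_i bI (b i) = bI [forall i, b i].
Proof.
case: (boolP [forall i, b i]) => [/forallP H|/forallPn [i Hi]].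
  by rewrite /bI; apply: big1 => i _; rewrite H.
by rewrite (bigD1 i) //= /bI (negbTE Hi) Rmult_0_l.
Qed.

Lemma adjE (n : nat) (z y : hvert n 3) :
  bI (hadj z y) = \big[Rplus/0]_i \big[Rmult/1]_j
     bI (if j == i then z j != y j else z j == y j).
Proof.
have E : forall i, [forall j, if j == i then z j != y j else z j == y j]
   = ([set i0 | z i0 != y i0] == [set i]).
  move=> i; apply/forallP/eqP => H.
    apply/setP => j; rewrite !inE; move: (H j); case: (j == i) => //.
    by move/eqP ->; rewrite eqxx.
  move=> j; move/setP: H => /(_ j); rewrite !inE.
  by move=> <-; case: (z j == y j).
under eq_bigr => i _ do rewrite prod_ind E.
rewrite /hadj.
case: (boolP (#|[set i | z i != y i]| == 1%nat)).
  move/cards1P => [i0 Hi0]; rewrite Hi0.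
  rewrite (bigD1 i0) //= {1}/bI eqxx big1 ?Rplus_0_r // => i Hi.
  rewrite /bI; case: eqP => // /set1_inj Hii; by rewrite Hii eqxx in Hi.
move=> Hn; rewrite /bI; symmetry; apply: big1 => i _.
case: eqP => // HD; by rewrite HD cards1 eqxx in Hn.
Qed.

Lemma sumMl (I : finType) (a : R) (F : I -> R) :
  \big[Rplus/0]_(i : I) (a * F i) = a * \big[Rplus/0]_(i : I) F i.
Proof. by rewrite big_distrr. Qed.
Lemma sumMr (I : finType) (a : R) (F : I -> R) :
  \big[Rplus/0]_(i : I) (F i * a) = \big[Rplus/0]_(i : I) F i * a.
Proof. by rewrite big_distrl. Qed.

Lemma sum_prod_ffun n (F : 'I_n -> 'I_3 -> R) :
  \big[Rplus/0]_(z : hvert n 3) \big[Rmult/1]_j F j (z j)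
  = \big[Rmult/1]_j \big[Rplus/0]_(a : 'I_3) F j a.
Proof. symmetry; exact: (@bigA_distr_bigA R 0 1 Rmult Rplus). Qed.

Definition lam (n : nat) (S : {set 'I_n}) : R := 1 - 3 * INR #|S| / (2 * INR n).

Lemma key (n : nat) (S : {set 'I_n}) (x y : hvert n 3) : (0 < n)%nat ->
  \big[Rplus/0]_(z : hvert n 3) (fS S x z * hp z y) = lam S * fS S x y.
Proof.
move=> n0.
have nR : 0 < INR n by apply: lt_0_INR; apply/ltP.
have hpE : forall z, hp z y = Rinv (2 * INR n) * bI (hadj z y).
  move=> z; rewrite /hp /bI; case: hadj => /=; last by lra.
  rewrite Rmult_1_r; f_equal; lra.
transitivity (/ (2 * INR n) * \big[Rplus/0]_i \big[Rplus/0]_(z : hvert n 3)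
   \big[Rmult/1]_j (gG (j \in S) (x j) (z j) *
       bI (if j == i then z j != y j else z j == y j))).
  rewrite exchange_big big_distrr /=; apply: eq_bigr => z _.
  rewrite hpE adjE -Rmult_assoc (Rmult_comm (fS S x z)) Rmult_assoc.
  f_equal; rewrite big_distrr /=; apply: eq_bigr => i _.
  by rewrite /fS big_split.
have Hi : forall i, \big[Rplus/0]_(z : hvert n 3)
       \big[Rmult/1]_j (gG (j \in S) (x j) (z j) *
           bI (if j == i then z j != y j else z j == y j))
     = (2 - 3 * bI (i \in S)) * fS S x y.
  move=> i; rewrite (sum_prod_ffun (fun j a => gG (j \in S) (x j) a * bI (if j == i then a != y j else a == y j))).
  transitivity (\big[Rmult/1]_j ((if j == i then (2 - 3 * bI (j \in S)) else 1)
                   * gG (j \in S) (x j) (y j))).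
    apply: eq_bigr => j _; case: (j == i).
      rewrite sumG_neq /bI; case: (j \in S); f_equal; lra.
    rewrite sumG_eq Rmult_1_l //.
  rewrite big_split /= /fS; f_equal.
  rewrite (bigD1 i) //= eqxx big1 ?Rmult_1_r // => j /negbTE -> //.
under eq_bigr => i _ do rewrite Hi.
rewrite sumMr big_split /= sum_constR.
rewrite card_ord.
under eq_bigr => i _ do rewrite Ropp_mult_distr_l.
rewrite sumMl (sum_indR (fun i => i \in S)) /lam.
have -> : #|(fun i => i \in S)| = #|S| by apply: eq_card.
set s := INR #|S|; set m := INR n; set f := fS S x y.
field; rewrite /m; lra.
Qed.

Lemma hpk_formula (n k : nat) (x y : hvert n 3) : (0 < n)%nat ->
  hpk k x y = \big[Rplus/0]_(A : {set 'I_n}) (lam A ^ k * fS A x y).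
Proof.
move=> n0; elim: k y => [|k IH] y /=.
  rewrite (_ : (if x == y then 1 else 0) = bI (x == y)) // -(fS_sum0 x y); apply: eq_bigr => A _; by rewrite Rmult_1_l.
under eq_bigr => z _ do rewrite IH -sumMr.
rewrite exchange_big /=; apply: eq_bigr => A _.
under eq_bigr => z _ do rewrite Rmult_assoc.
rewrite sumMl key //; ring.
Qed.

Lemma iter_powR (m : nat) (c : R) : iter m (Rmult c) 1 = c ^ m.
Proof. by elim: m => //= m ->. Qed.

Lemma prod_constR (I : finType) (A : pred I) (c : R) :
  \big[Rmult/1]_(i in A) c = c ^ #|A|.
Proof. by rewrite big_const iter_powR. Qed.

Lemma orth (n : nat) (S T : {set 'I_n}) (x : hvert n 3) :
  \big[Rplus/0]_(y : hvert n 3) (fS S x y * fS T x y)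
  = if S == T then (1/3) ^ n * 2 ^ #|S| else 0.
Proof.
transitivity (\big[Rplus/0]_(y : hvert n 3) \big[Rmult/1]_i
   (gG (i \in S) (x i) (y i) * gG (i \in T) (x i) (y i))).
  by apply: eq_bigr => y _; rewrite /fS big_split.
rewrite (sum_prod_ffun (fun i a => gG (i \in S) (x i) a * gG (i \in T) (x i) a)).
under eq_bigr => i _ do rewrite sumG_sq.
case: (boolP (S == T)) => [/eqP <-|nST].
  transitivity (\big[Rmult/1]_i (1/3 * (if i \in S then 2 else 1))).
    by apply: eq_bigr => i _; case: (i \in S) => //; lra.
  rewrite big_split /= (prod_constR (fun _ => true)) -big_mkcond prod_constR.
  rewrite (_ : #|(fun _ : 'I_n => true)| = n) //.
  by rewrite cardT size_enum_ord.
have [i Hi] : exists i, (i \in S) != (i \in T).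
  apply/existsP; apply: contraR nST => /existsPn H; apply/eqP/setP => i.
  by move: (H i); rewrite negbK => /eqP.
rewrite (bigD1 i) //=.
by move: Hi; case: (i \in S); case: (i \in T) => //= _; rewrite Rmult_0_l.
Qed.

Lemma exp_powR (x : R) (m : nat) : exp x ^ m = exp (INR m * x).
Proof.
elim: m => [|m IH]; first by rewrite /= Rmult_0_l exp_0.
rewrite S_INR Rmult_plus_distr_r Rmult_1_l exp_plus -IH /=; ring.
Qed.

Lemma exp_leR (x y : R) : x <= y -> exp x <= exp y.
Proof. case=> [H|->]; [left; exact: exp_increasing | lra]. Qed.

Lemma pow_lt_S (a b : R) (m : nat) : 0 <= b < a -> b ^ m.+1 < a ^ m.+1.
Proof.
move=> [Hb Hba]; elim: m => [|m IH]; first by rewrite /= !Rmult_1_r.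
rewrite /= in IH *.
have hu : 0 <= b * b ^ m by apply: Rmult_le_pos => //; apply: pow_le.
set u := b * b ^ m in IH hu *; set v := a * a ^ m in IH *.
nra.
Qed.

Lemma pow_le_inv (a b : R) (m : nat) : 0 <= a -> 0 <= b -> a ^ m.+1 <= b ^ m.+1 -> a <= b.
Proof.
move=> Ha Hb H; case: (Rle_or_lt a b) => // Hba.
have := @pow_lt_S a b m (conj Hb Hba); lra.
Qed.

Lemma exp4 : exp 4 <= 64.
Proof.
have h1 : exp (1/20) <= 20/19.
  have h := exp_ineq1_le (-(1/20)).
  have e : exp (1/20) * exp (-(1/20)) = 1 by rewrite -exp_plus Rplus_opp_r exp_0.
  have p := exp_pos (1/20). nra.
have -> : 4 = INR 80 * (1/20) by rewrite INR_IZR_INZ /=; lra.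
rewrite -exp_powR.
apply: Rle_trans (pow_incr _ _ 80 _) _.
  split; [left; exact: exp_pos | exact: h1].
have -> : (20/19) = IZR 20 * / IZR 19 by [].
rewrite Rpow_mult_distr pow_inv !pow_IZR.
apply: (Rmult_le_reg_r (IZR (19 ^ Z.of_nat 80))).
  apply: IZR_lt; by vm_compute.
rewrite Rmult_assoc Rinv_l; last by apply: not_0_IZR; vm_compute.
rewrite Rmult_1_r -mult_IZR; apply: IZR_le; by vm_compute.
Qed.

Lemma numcase (n : nat) : (3 <= n)%nat -> 3 ^ (9 * n) <= 9 ^ 9 * (2 * INR n) ^ (4 * n).
Proof.
move=> Hn.
case: (leqP 6 n) => Hn6.
  have h2n : 12 <= 2 * INR n.
    have : (6 <= INR n) by rewrite (_ : 6 = INR 6); [apply: le_INR; apply/leP | simpl; lra].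
    lra.
  have h1 : 3 ^ 9 <= (2 * INR n) ^ 4.
    apply: (Rle_trans _ (12 ^ 4)); [simpl; lra | apply: pow_incr; lra].
  rewrite !pow_mult.
  have h2 : (3 ^ 9) ^ n <= ((2 * INR n) ^ 4) ^ n by apply: pow_incr; split; [apply: pow_le; lra | exact h1].
  have h3 : 0 <= ((2 * INR n) ^ 4) ^ n by apply: pow_le; apply: pow_le; lra.
  have h4 : 1 <= 9 ^ 9 by simpl; lra.
  nra.
have : (n = 3 \/ n = 4 \/ n = 5)%nat.
  move: Hn Hn6; case: n => [|[|[|[|[|[|n]]]]]] //; auto.
case=> [->|[->|->]].
- rewrite (_ : 2 * INR 3 = IZR 6); last by simpl; lra.
  rewrite !pow_IZR -mult_IZR; apply: IZR_le; by vm_compute.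
- rewrite (_ : 2 * INR 4 = IZR 8); last by simpl; lra.
  rewrite !pow_IZR -mult_IZR; apply: IZR_le; by vm_compute.
- rewrite (_ : 2 * INR 5 = IZR 10); last by simpl; lra.
  rewrite !pow_IZR -mult_IZR; apply: IZR_le; by vm_compute.
Qed.

Lemma tail (n k : nat) (c : R) : (3 <= n)%nat -> 0 < c ->
  INR k = INR n / 3 * (ln (2 * INR n) + c) ->
  3 ^ n * (1/4) ^ k <= 9 * exp (- c).
Proof.
move=> Hn Hc Hk.
have nR : 3 <= INR n by rewrite (_ : 3 = INR 3); [apply: le_INR; apply/leP | simpl; lra].
set t := 2 * INR n.
have tpos : 0 < t by rewrite /t; lra.
set X := exp (3 * INR k / INR n).
have Xpos : 0 < X by apply: exp_pos.
have hX : X = t * exp c.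
  rewrite /X (_ : 3 * INR k / INR n = ln t + c); last by rewrite Hk /t; field; lra.
  by rewrite exp_plus exp_ln.
have hX2 : t <= X.
  have := exp_ineq1_le c; rewrite hX; nra.
have ec := exp_pos c.
have hE : exp (- c) = t / X by rewrite hX exp_Ropp; field; repeat split; lra.
have hX4 : X ^ (4 * n) = exp (12 * INR k).
  rewrite /X exp_powR mult_INR; f_equal; simpl INR; field; lra.
have h4k : exp (12 * INR k) <= 4 ^ (k * 9).
  rewrite (_ : 12 * INR k = INR (3 * k) * 4); last by rewrite mult_INR; simpl INR; ring.
  rewrite -exp_powR (_ : (k * 9 = 3 * (3 * k))%nat); last by rewrite mulnA (mulnC _ k).
  rewrite (pow_mult 4 3 (3 * k)) (_ : 4 ^ 3 = 64); last by simpl; ring.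
  apply: pow_incr; split; [left; apply: exp_pos | exact: exp4].
have hsplit : (4 * n = 9 + (4 * n - 9))%nat by rewrite subnKC //; apply: leq_trans (leq_mul (leqnn 4) Hn).
have hXr : t ^ (4 * n - 9) <= X ^ (4 * n - 9) by apply: pow_incr; lra.
have htp : 0 <= t ^ (4 * n - 9) by apply: pow_le; lra.
have hX9 : 0 <= X ^ 9 by apply: pow_le; lra.
have hnum := @numcase n Hn; rewrite -/t in hnum.
have key : (3 ^ n * X) ^ 9 <= (9 * t * 4 ^ k) ^ 9.
  have e1 : (3 ^ n * X) ^ 9 = 3 ^ (9 * n) * X ^ 9.
    rewrite Rpow_mult_distr -pow_mult; do 2 f_equal; rewrite mulnC //.
  have e2 : (9 * t * 4 ^ k) ^ 9 = 9 ^ 9 * t ^ 9 * 4 ^ (k * 9).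
    rewrite (Rpow_mult_distr (9 * t)) (Rpow_mult_distr 9 t) -pow_mult //.
  rewrite e1 e2.
  have ht : t ^ (4 * n) = t ^ 9 * t ^ (4 * n - 9).
    rewrite -pow_add.
    have -> : (9 + (4 * n - 9))%coq_nat = (4 * n)%nat by symmetry; exact: hsplit.
    by [].
  rewrite ht in hnum.
  have h1 : X ^ 9 * X ^ (4 * n - 9) <= 4 ^ (k * 9).
    rewrite -pow_add.
    have -> : (9 + (4 * n - 9))%coq_nat = (4 * n)%nat by symmetry; exact: hsplit.
    by rewrite hX4.
  have h2 : 0 <= 9 ^ 9 * t ^ 9 by apply: Rmult_le_pos; apply: pow_le; lra.
  have h3 : 0 <= 3 ^ (9 * n) by apply: pow_le; lra.
  set a := 3 ^ (9 * n) in hnum h3 *; set b := 9 ^ 9 in hnum h2 *.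
  set u := t ^ 9 in hnum h2 *; set v := t ^ (4 * n - 9) in hnum hXr htp *.
  set w := X ^ 9 in h1 hX9 *; set z := X ^ (4 * n - 9) in h1 hXr *.
  set K := 4 ^ (k * 9) in h1 *.
  have : a * w <= b * u * v * w by nra.
  have : b * u * (v * w) <= b * u * K.
    apply: Rmult_le_compat_l => //; nra.
  nra.
have k4 : 0 < 4 ^ k by apply: pow_lt; lra.
have H : 3 ^ n * X <= 9 * t * 4 ^ k.
  apply: (@pow_le_inv _ _ 8) => //.
    apply: Rmult_le_pos; [apply: pow_le; lra | lra].
  apply: Rmult_le_pos; [lra | lra].
rewrite hE (_ : (1/4) ^ k = / 4 ^ k); last by rewrite /Rdiv Rmult_1_l pow_inv.
apply: (Rmult_le_reg_r (4 ^ k * X)); first by apply: Rmult_lt_0_compat.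
rewrite (_ : 3 ^ n * / 4 ^ k * (4 ^ k * X) = 3 ^ n * X); last by field; lra.
rewrite (_ : 9 * (t / X) * (4 ^ k * X) = 9 * t * 4 ^ k); last by field; lra.
exact: H.
Qed.

Lemma sum_abs_le (I : finType) (P : pred I) (F : I -> R) :
  Rabs (\big[Rplus/0]_(i in P) F i) <= \big[Rplus/0]_(i in P) Rabs (F i).
Proof.
apply: (big_ind2 (fun a b => Rabs a <= b)).
- by rewrite Rabs_R0; lra.
- move=> a1 a2 b1 b2 h1 h2; apply: Rle_trans (Rabs_triang _ _) _; lra.
- by move=> i _; lra.
Qed.

Lemma sum_ge0 (I : finType) (P : pred I) (F : I -> R) :
  (forall i, 0 <= F i) -> 0 <= \big[Rplus/0]_(i in P) F i.
Proof.
move=> H; apply: (big_ind (fun a => 0 <= a)) => //; [lra | move=> a b; lra].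
Qed.

Lemma sum_le (I : finType) (P : pred I) (F G : I -> R) :
  (forall i, F i <= G i) -> \big[Rplus/0]_(i in P) F i <= \big[Rplus/0]_(i in P) G i.
Proof.
move=> H; apply: (big_ind2 (fun a b => a <= b)) => //; [lra | move=> a1 a2 b1 b2; lra].
Qed.

Lemma sum_opp (I : finType) (P : pred I) (F : I -> R) :
  \big[Rplus/0]_(i in P) (- F i) = - \big[Rplus/0]_(i in P) F i.
Proof.
apply: (big_ind2 (fun a b => a = - b)) => //; [lra | move=> a1 a2 b1 b2 -> ->; lra].
Qed.

Lemma sum_sub (I : finType) (P : pred I) (F G : I -> R) :
  \big[Rplus/0]_(i in P) F i - \big[Rplus/0]_(i in P) G i
  = \big[Rplus/0]_(i in P) (F i - G i).
Proof. by rewrite /Rminus big_split /= sum_opp. Qed.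

Lemma half_bound (T : finType) (D : T -> R) (S : {set T}) :
  \big[Rplus/0]_x D x = 0 ->
  Rabs (\big[Rplus/0]_(x in S) D x) <= / 2 * \big[Rplus/0]_x Rabs (D x).
Proof.
move=> H0.
have e1 : \big[Rplus/0]_x D x = \big[Rplus/0]_(x in S) D x + \big[Rplus/0]_(x in [predC S]) D x.
  by rewrite (bigID (fun x => x \in S)) /=.
have e2 : \big[Rplus/0]_x Rabs (D x) = \big[Rplus/0]_(x in S) Rabs (D x) + \big[Rplus/0]_(x in [predC S]) Rabs (D x).
  by rewrite (bigID (fun x => x \in S)) /=.
have h1 : Rabs (\big[Rplus/0]_(x in S) D x) <= \big[Rplus/0]_(x in S) Rabs (D x)
  := sum_abs_le (mem S) D.
have h2 : Rabs (\big[Rplus/0]_(x in [predC S]) D x) <= \big[Rplus/0]_(x in [predC S]) Rabs (D x)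
  := sum_abs_le [predC S] D.
rewrite e2.
rewrite H0 in e1.
set a := \big[Rplus/0]_(x in S) D x in e1 h1 *.
set b := \big[Rplus/0]_(x in [predC S]) D x in e1 h2 *.
have e3 : b = - a by lra.
rewrite e3 Rabs_Ropp in h2; lra.
Qed.

Lemma tv_le (T : finType) (mu nu : T -> R) (B : R) : 0 <= B ->
  (forall S : {set T}, Rabs (meas mu S - meas nu S) <= B) -> 0 <= tv mu nu <= B.
Proof.
move=> HB H; split.
  apply: (big_ind (fun v => 0 <= v)); first lra.
    move=> a b ha hb; apply: Rle_trans ha (Rmax_l _ _).
  move=> S _; exact: Rabs_pos.
apply: (big_ind (fun v => v <= B)) => //.
  by move=> a b ha hb; apply: Rmax_lub.
Qed.

Lemma sumMl' (I : finType) (a : R) (F : I -> R) :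
  \big[Rplus/0]_(i : I) (a * F i) = a * \big[Rplus/0]_(i : I) F i.
Proof. by rewrite big_distrr. Qed.
Lemma sumMr' (I : finType) (a : R) (F : I -> R) :
  \big[Rplus/0]_(i : I) (F i * a) = \big[Rplus/0]_(i : I) F i * a.
Proof. by rewrite big_distrl. Qed.

Lemma cs (T : finType) (F : T -> R) :
  (\big[Rplus/0]_x F x) ^ 2 <= INR #|T| * \big[Rplus/0]_x F x ^ 2.
Proof.
have H : 0 <= \big[Rplus/0]_x \big[Rplus/0]_y (F x - F y) ^ 2.
  apply: sum_ge0 => x; apply: sum_ge0 => y; apply: pow2_ge_0.
have E : forall x, \big[Rplus/0]_y (F x - F y) ^ 2 =
   INR #|T| * (F x * F x) + (-2 * F x) * \big[Rplus/0]_y F y + \big[Rplus/0]_y (F y * F y).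
  move=> x.
  transitivity (\big[Rplus/0]_y (F x * F x + (-2 * F x) * F y + F y * F y)).
    by apply: eq_bigr => y _; ring.
  by rewrite !big_split /= (sumMl' (-2 * F x) F) (sum_constR _ (F x * F x)).
rewrite (eq_bigr _ (fun x _ => E x)) in H.
rewrite !big_split /= (sumMl' (INR #|T|) (fun x => F x * F x)) in H.
rewrite (sumMr' (\big[Rplus/0]_y F y) (fun x => -2 * F x)) in H.
rewrite (sumMl' (-2) F) in H.
rewrite (sum_constR _ (\big[Rplus/0]_y (F y * F y))) in H.
have EQ : \big[Rplus/0]_x F x ^ 2 = \big[Rplus/0]_x (F x * F x) by apply: eq_bigr => x _; ring.
rewrite EQ.
set S := \big[Rplus/0]_y F y in H *.
set Q := \big[Rplus/0]_y (F y * F y) in H *.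
nra.
Qed.

Lemma INR_expn (a m : nat) : INR (expn a m) = INR a ^ m.
Proof. elim: m => [|m IH]; first by rewrite expn0. by rewrite expnS mult_INR IH. Qed.

Lemma card_hvert n : INR #|hvert n 3| = 3 ^ n.
Proof.
rewrite /hvert card_ffun !card_ord INR_expn; f_equal; simpl; lra.
Qed.

Lemma hpiE n (x : hvert n 3) : @hpi n 3 x = (1/3) ^ n.
Proof. by rewrite /hpi card_hvert /Rdiv Rmult_1_l pow_inv. Qed.

Lemma card_true n : #|(fun _ : 'I_n => true)| = n.
Proof. by rewrite cardT size_enum_ord. Qed.

Lemma fS0 n (x y : hvert n 3) : fS set0 x y = (1/3) ^ n.
Proof.
rewrite /fS; under eq_bigr => i _ do rewrite in_set0.
by rewrite /= (prod_constR (fun _ => true)) card_true.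
Qed.

Lemma lam0 n : lam (set0 : {set 'I_n}) = 1.
Proof. rewrite /lam cards0 /=; lra. Qed.

Lemma subset_pow n (c : R) :
  \big[Rplus/0]_(A : {set 'I_n}) c ^ #|A| = (c + 1) ^ n.
Proof.
transitivity (\big[Rmult/1]_(i : 'I_n) (c + 1)); last first.
  by rewrite (prod_constR (fun _ => true)) card_true.
rewrite (@bigA_distr R 0 1 Rmult Rplus _ (fun _ => c) (fun _ => 1)).
apply: eq_bigr => A _.
by rewrite -big_mkcond /= prod_constR.
Qed.

Local Arguments pow : simpl never.

Lemma term_bound n k (A : {set 'I_n}) : (0 < n)%nat ->
  (if A == set0 then 0 else lam A ^ k) ^ 2 * 2 ^ #|A|
  <= (2 * exp (- (3 * INR k / INR n))) ^ #|A| + (1/4) ^ k * 2 ^ #|A| + - bI (A == set0).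
Proof.
move=> n0.
have nR : 0 < INR n by apply: lt_0_INR; apply/ltP.
have hq : 0 <= (1/4) ^ k by apply: pow_le; lra.
have h2s : 0 <= 2 ^ #|A| by apply: pow_le; lra.
have hqs : 0 <= (1/4) ^ k * 2 ^ #|A| by apply: Rmult_le_pos.
have hy : 0 <= (2 * exp (- (3 * INR k / INR n))) ^ #|A|.
  apply: pow_le; have := exp_pos (- (3 * INR k / INR n)); lra.
case: eqP => [->|nA].
  rewrite cards0 /bI /=; lra.
rewrite /bI /= Ropp_0 Rplus_0_r.
have hs : INR #|A| <= INR n.
  apply: le_INR; apply/leP; apply: leq_trans (max_card A) _; by rewrite card_ord.
have hsq : (lam A ^ k) ^ 2 = (lam A ^ 2) ^ k by rewrite -!pow_mult Nat.mul_comm.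
case: (Rle_or_lt 0 (lam A)) => hl.
  set e := exp (- (3 * INR #|A| / (2 * INR n))).
  have h1 : lam A <= e.
    rewrite /lam /e; have := exp_ineq1_le (- (3 * INR #|A| / (2 * INR n))); lra.
  have h2 : (lam A ^ k) ^ 2 <= exp (INR (k * 2) * - (3 * INR #|A| / (2 * INR n))).
    rewrite -exp_powR -/e -pow_mult; apply: pow_incr; lra.
  have h3 : (2 * exp (- (3 * INR k / INR n))) ^ #|A|
       = exp (INR (k * 2) * - (3 * INR #|A| / (2 * INR n))) * 2 ^ #|A|.
    rewrite Rpow_mult_distr exp_powR Rmult_comm; f_equal; f_equal.
    rewrite mult_INR /=; field; lra.
  rewrite h3.
  have : (lam A ^ k) ^ 2 * 2 ^ #|A| <= exp (INR (k * 2) * - (3 * INR #|A| / (2 * INR n))) * 2 ^ #|A|.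
    by apply: Rmult_le_compat_r.
  move=> HH; apply: Rle_trans HH _; set X := exp _ * _; have := Rplus_le_compat_l X _ _ hqs; rewrite Rplus_0_r; exact.
have hr : -1/2 <= lam A.
  rewrite /lam; set r := 3 * INR #|A| / (2 * INR n).
  have : r * (2 * INR n) = 3 * INR #|A| by rewrite /r; field; lra.
  nra.
have h4 : (lam A ^ 2) ^ k <= (1/4) ^ k by apply: pow_incr; split; [apply: pow2_ge_0 | rewrite /pow; nra].
rewrite hsq.
have : (lam A ^ 2) ^ k * 2 ^ #|A| <= (1/4) ^ k * 2 ^ #|A| by apply: Rmult_le_compat_r.
move=> HH; apply: Rle_trans HH _; have := Rplus_le_compat_r ((1/4) ^ k * 2 ^ #|A|) _ _ hy; rewrite Rplus_0_l; exact.
Qed.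

Lemma sum_ind_set0 n : \big[Rplus/0]_(A : {set 'I_n}) bI (A == set0) = 1.
Proof.
rewrite (bigD1 set0) //= {1}/bI eqxx big1 ?Rplus_0_r // => A /negbTE ->; by [].
Qed.

Lemma sum_leT (I : finType) (F G : I -> R) :
  (forall i, F i <= G i) -> \big[Rplus/0]_i F i <= \big[Rplus/0]_i G i.
Proof.
move=> H; apply: (big_ind2 (fun a b => a <= b)) => //; [lra | move=> a1 a2 b1 b2; lra].
Qed.

Lemma sum_oppT (I : finType) (F : I -> R) :
  \big[Rplus/0]_i (- F i) = - \big[Rplus/0]_i F i.
Proof.
apply: (big_ind2 (fun a b => a = - b)) => //; [lra | move=> a1 a2 b1 b2 -> ->; lra].
Qed.

Theorem main_bound (n k : nat) (c : R) :
  (3 <= n)%nat -> (0 < c)%R ->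
  INR k = (INR n / 3 * (ln (2 * INR n) + c))%R ->
  (tv (@hnu n 2%nat k) (@hpi n 3%nat) ^ 2 <= 5 / 2 * (exp (exp (- c)) - 1))%R.
Proof.
move=> Hn Hc Hk.
have n0 : (0 < n)%nat by apply: leq_trans Hn.
have nR : 0 < INR n by apply: lt_0_INR; apply/ltP.
set o : hvert n 3 := horigin n 2.
set b := fun A : {set 'I_n} => if A == set0 then 0 else lam A ^ k.
set D := fun x : hvert n 3 => hnu k x - hpi x.
have HD : forall x, D x = \big[Rplus/0]_A (b A * fS A o x).
  move=> x; rewrite /D /hnu hpk_formula // hpiE.
  rewrite (bigD1 set0) //= {1}/lam cards0 (fS0 (horigin n 2) x).
  rewrite [X in _ = X](bigD1 set0) //= {1}/b eqxx.
  rewrite (_ : 1 - 3 * INR 0 / (2 * INR n) = 1); last by simpl; lra.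
  rewrite pow1 Rmult_0_l Rplus_0_l Rmult_1_l.
  have -> : forall a c : R, a + c - a = c by move=> *; ring.
  by apply: eq_bigr => A /negbTE H; rewrite /b H.
have Hproj : forall T, \big[Rplus/0]_x (D x * fS T o x) = b T * ((1/3) ^ n * 2 ^ #|T|).
  move=> T.
  under eq_bigr => x _ do rewrite HD -sumMr.
  rewrite exchange_big /=.
  under eq_bigr => A _ do (under eq_bigr => x _ do rewrite Rmult_assoc; rewrite sumMl orth).
  rewrite (bigD1 T) //= eqxx big1 ?Rplus_0_r // => A /negbTE ->; by rewrite Rmult_0_r.
have Hsum : \big[Rplus/0]_x D x = 0.
  have := Hproj set0; rewrite /b eqxx Rmult_0_l.
  under eq_bigr => x _ do rewrite fS0.
  rewrite sumMr => H.
  have : (1/3) ^ n <> 0 by apply: pow_nonzero; lra.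
  move=> H1; apply: (Rmult_eq_reg_r ((1/3) ^ n)) => //; lra.
have HD2 : \big[Rplus/0]_x D x ^ 2 = \big[Rplus/0]_A (b A ^ 2 * ((1/3) ^ n * 2 ^ #|A|)).
  transitivity (\big[Rplus/0]_x \big[Rplus/0]_A (b A * (D x * fS A o x))).
    apply: eq_bigr => x _; rewrite {1}/pow HD Rmult_1_r -sumMr.
    by apply: eq_bigr => A _; ring.
  rewrite exchange_big /=; apply: eq_bigr => A _.
  rewrite sumMl Hproj.
  rewrite -Rmult_assoc; f_equal; rewrite /pow Rmult_1_r //.
have Htv : 0 <= tv (hnu k) (@hpi n 3) <= / 2 * \big[Rplus/0]_x Rabs (D x).
  apply: tv_le.
    apply: Rmult_le_pos; first lra.
    apply: sum_ge0 => x; exact: Rabs_pos.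
  move=> S; rewrite /meas sum_sub; exact: half_bound Hsum.
have H1 : tv (hnu k) (@hpi n 3) ^ 2 <= (/ 2 * \big[Rplus/0]_x Rabs (D x)) ^ 2.
  by apply: pow_incr.
have H2 : (\big[Rplus/0]_x Rabs (D x)) ^ 2 <= 3 ^ n * \big[Rplus/0]_x D x ^ 2.
  have := cs (fun x => Rabs (D x)); rewrite card_hvert.
  have -> : \big[Rplus/0]_x Rabs (D x) ^ 2 = \big[Rplus/0]_x D x ^ 2.
    by apply: eq_bigr => x _; rewrite pow2_abs.
  by [].
have H3 : 3 ^ n * \big[Rplus/0]_x D x ^ 2 = \big[Rplus/0]_A (b A ^ 2 * 2 ^ #|A|).
  rewrite HD2 -sumMl'; apply: eq_bigr => A _.
  have e : 3 ^ n * (1/3) ^ n = 1.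
    by rewrite -Rpow_mult_distr (_ : 3 * (1/3) = 1) ?pow1 //; lra.
  set w := 2 ^ #|A|; set v := b A ^ 2; set t := 3 ^ n; set u := (1/3) ^ n in e *.
  rewrite (_ : t * (v * (u * w)) = (t * u) * (v * w)); last by ring.
  by rewrite e Rmult_1_l.
set y := 2 * exp (- (3 * INR k / INR n)).
have H4 : \big[Rplus/0]_A (b A ^ 2 * 2 ^ #|A|) <= (y + 1) ^ n + (1/4) ^ k * 3 ^ n - 1.
  apply: Rle_trans (sum_leT (fun A => term_bound k A n0)) _.
  rewrite !big_split /= sumMl' sum_oppT sum_ind_set0 !subset_pow.
  rewrite (_ : 2 + 1 = 3); last lra.
  rewrite -/y; lra.
set E := exp (- c).
have hE : 0 < E by apply: exp_pos.
have hy : y = E / INR n.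
  rewrite /y (_ : 3 * INR k / INR n = ln (2 * INR n) + c); last by rewrite Hk; field; lra.
  rewrite Ropp_plus_distr exp_plus exp_Ropp exp_ln; last lra.
  rewrite /E; field; lra.
have H5 : (y + 1) ^ n <= exp E.
  have ee : exp (E / INR n) ^ n = exp E by rewrite exp_powR; f_equal; field; lra.
  have ep : 0 < E / INR n by apply: Rdiv_lt_0_compat.
  rewrite -ee hy; apply: pow_incr; split; first lra.
  have := exp_ineq1_le (E / INR n); lra.
have H6 := @tail n k c Hn Hc Hk.
have H7 : E <= exp E - 1 by have := exp_ineq1_le E; lra.
rewrite -/E in H6.
have H8 : (/ 2 * \big[Rplus/0]_x Rabs (D x)) ^ 2 = / 4 * (\big[Rplus/0]_x Rabs (D x)) ^ 2.
  rewrite Rpow_mult_distr; f_equal; rewrite /pow; field.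
rewrite H8 in H1.
set Q := (\big[Rplus/0]_x Rabs (D x)) ^ 2 in H1 H2.
rewrite H3 in H2.
set q := (1/4) ^ k * 3 ^ n in H4 H6.
set Sb := \big[Rplus/0]_A (b A ^ 2 * 2 ^ #|A|) in H2 H4.
rewrite Rmult_comm -/q in H6.
lra.
Qed.


(* q = 3, written as 2.+1 *)
Theorem theorem1p2 (n k : nat) (c : R) :
  (3 <= n)%nat -> (0 < c)%R ->
  INR k = (INR n / 3 * (ln (2 * INR n) + c))%R ->
  (tv (@hnu n 2%nat k) (@hpi n 3%nat) ^ 2 <= 5 / 2 * (exp (exp (- c)) - 1))%R.
Proof. exact: main_bound. Qed.
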